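(* Let $\mathbb{F}$ be a field of characteristic not $2$ and let $\Phi: M_n(\mathbb{F}) \to M_r(\mathbb{F})$ be a linear map sending idempotents to idempotents. Then $\Phi$ is a Jordan homomorphism, and there exist an invertible $S \in M_r(\mathbb{F})$ and nonnegative integers $k_1,k_2$ with $t = r - nk_1 - nk_2 \ge 0$ such that $$\Phi(A) = S\begin{pmatrix} I_{k_1}\otimes A & & \\ & I_{k_2}\otimes A^{\mathrm t} & \\ & & 0_t\end{pmatrix}S^{-1}\quad\text{for all } A\in M_n(\mathbb{F}).$$
   Context: A linear map $\Phi$ is a Jordan homomorphism if $\Phi(AB+BA) = \Phi(A)\Phi(B)+\Phi(B)\Phi(A)$ for all $A,B$. $I_k\otimes A$ denotes $A\oplus\cdots\oplus A$ ($k$ copies); $A^{\mathrm t}$ is the transpose. Unspecified blocks are zero. *)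

(* Defs.v *)
From HB Require Import structures.
From mathcomp Require Import all_boot all_order all_algebra.
Set Implicit Arguments. Unset Strict Implicit. Unset Printing Implicit Defensive.
Import GRing.Theory.
Local Open Scope ring_scope.

(* I_k (x) A = A (+) ... (+) A (k copies), an (k*n) x (k*n) block diagonal matrix:
   entry (i,j) is A (i mod n) (j mod n) when i and j lie in the same n-block, else 0. *)
(* residue of m modulo n as an element of 'I_n (for n = 0 the type 'I_0 is
   empty, but then it is never used: the index type 'I_(k*0) is empty too). *)
Definition ord_mod (n : nat) (m : nat) : 'I_n.+1 := Ordinal (ltn_pmod m (ltn0Sn n)).
Definition kron_id {F : pzRingType} (k n : nat) : 'M[F]_n -> 'M[F]_(k * n) :=
  match n with
  | 0 => fun _ => 0
  | n'.+1 => fun A : 'M[F]_n'.+1 =>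
      \matrix_(i < k * n'.+1, j < k * n'.+1)
        if (i %/ n'.+1 == j %/ n'.+1)%N then A (ord_mod n' i) (ord_mod n' j) else 0
  end.

(* The block-diagonal matrix diag(I_k1 (x) A, I_k2 (x) A^t, 0_t) with t = r - n k1 - n k2,
   viewed as an r x r matrix (when n k1 + n k2 <= r the dimensions agree exactly;
   conform_mx is only used to give it the type 'M_r). *)
Definition std_form {F : pzRingType} (n r k1 k2 : nat) (A : 'M[F]_n) : 'M[F]_r :=
  conform_mx (0 : 'M[F]_r)
    (block_mx (block_mx (kron_id k1 A) 0 0 (kron_id k2 A^T)) 0 0
              (0 : 'M[F]_(r - (n * k1 + n * k2)))).

Definition jordan_hom {F : pzRingType} (n r : nat) (Phi : 'M[F]_n -> 'M[F]_r) : Prop :=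
  forall A B : 'M[F]_n,
    Phi (A *m B + B *m A) = Phi A *m Phi B + Phi B *m Phi A.

(* Main.v *)
Require Import Defs.
From HB Require Import structures.
From mathcomp Require Import all_boot all_order all_algebra.
Set Implicit Arguments. Unset Strict Implicit. Unset Printing Implicit Defensive.
Import GRing.Theory.
Local Open Scope ring_scope.

Section PartA.
Variables (F : fieldType) (n r : nat).
Hypothesis char2 : (2%:R : F) != 0.
Variable Phi : {linear 'M[F]_n -> 'M[F]_r}.
Hypothesis hidem : forall A : 'M[F]_n, A *m A = A -> Phi A *m Phi A = Phi A.

Definition Ddef (A B : 'M[F]_n) := Phi A *m Phi B + Phi B *m Phi A - Phi (A *m B + B *m A).
Local Notation D := Ddef.


Lemma half_eq0 (m p : nat) (X : 'M[F]_(m,p)) : X + X = 0 -> X = 0.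
Proof.
move=> h; have : (2%:R : F) *: X = 0 by rewrite scaler_nat mulr2n.
by move/eqP; rewrite scaler_eq0 (negPf char2) /= => /eqP.
Qed.

Lemma DC A B : D A B = D B A.
Proof. by rewrite /D [Phi B *m Phi A + _]addrC [B *m A + _]addrC. Qed.

Lemma DDl A A' B : D (A + A') B = D A B + D A' B.
Proof.
rewrite /D !raddfD /= !mulmxDl !raddfD /=.
rewrite (addrACA (Phi A *m Phi B)) (addrACA (- Phi (A *m B))).
by rewrite [LHS]addrACA.
Qed.

Lemma DZl c A B : D (c *: A) B = c *: D A B.
Proof.
rewrite /D !linearZ /= -!scalemxAl -!scalerDr linearZ /=.
by rewrite scalerBr.
Qed.

Lemma DNl A B : D (- A) B = - D A B.
Proof. by rewrite -scaleN1r DZl scaleN1r. Qed.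

Lemma DBl A A' B : D (A - A') B = D A B - D A' B.
Proof. by rewrite DDl DNl. Qed.

Lemma DDr A B B' : D A (B + B') = D A B + D A B'.
Proof. by rewrite DC DDl !(DC B) (DC B'). Qed.
Lemma DBr A B B' : D A (B - B') = D A B - D A B'.
Proof. by rewrite DC DBl !(DC B) (DC B'). Qed.

Lemma DNr A B : D A (- B) = - D A B.
Proof. by rewrite DC DNl DC. Qed.

Lemma D0l B : D 0 B = 0.
Proof. by rewrite -(scale0r (0:'M[F]_n)) DZl scale0r. Qed.

Lemma Didem E : E *m E = E -> D E E = 0.
Proof. by move=> h; rewrite /D h hidem // raddfD subrr. Qed.

Lemma sq_exp (m : nat) (p q : 'M[F]_m) :
  (p + q) *m (p + q) = p *m p + (p *m q + q *m p + q *m q).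
Proof. by rewrite mulmxDl !mulmxDr !addrA. Qed.

Lemma idem_plus (m : nat) (E N : 'M[F]_m) : E *m E = E -> E *m N + N *m E = N -> N *m N = 0 ->
  (E + N) *m (E + N) = E + N.
Proof. by move=> hE hEN hN; rewrite sq_exp hE hN addr0 hEN. Qed.

Lemma DL E N : E *m E = E -> E *m N + N *m E = N -> N *m N = 0 ->
  D E N = 0 /\ D N N = 0.
Proof.
move=> hE hEN hN.
have hp := idem_plus hE hEN hN.
have hm : (E + - N) *m (E + - N) = E + - N.
  apply: idem_plus => //; first by rewrite mulmxN mulNmx -opprD hEN.
  by rewrite mulmxN mulNmx opprK.
move: (hidem hp) (hidem hm) (hidem hE); rewrite !(raddfD Phi) !(raddfN Phi).
rewrite !sq_exp => h1 h2 hE'.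
move: h1 h2; rewrite hE' => /addrI h1 /addrI h2.
move: h2; rewrite mulmxN mulNmx mulmxN mulNmx opprK -opprD => h2.
set s := Phi E *m Phi N + Phi N *m Phi E in h1 h2.
have hNN : Phi N *m Phi N = 0.
  apply: half_eq0.
  have := congr2 (fun x y => x + y) h1 h2.
  by rewrite subrr addrACA subrr add0r.
split.
  rewrite /D -/s hEN.
  by move: h1; rewrite hNN addr0 => ->; rewrite subrr.
by rewrite /D hNN hN !addr0 raddf0 subrr.
Qed.

Local Notation e i j := (delta_mx i j : 'M[F]_n).

Ltac mxs := rewrite ?(mulmxDl, mulmxDr, mulmxBl, mulmxBr, mulmxN, mulNmx,
  mul_delta_mx_cond, eqxx, mulr1n, mulr0n, addr0, add0r, subr0, sub0r, oppr0, opprK).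

Lemma D1 i : D (e i i) (e i i) = 0.
Proof. by apply: Didem; mxs. Qed.

Lemma D3 i j : i != j -> D (e i i) (e i j) = 0 /\ D (e i j) (e i j) = 0.
Proof.
move=> ij; have ij1 := negbTE ij; have ij2 : (j == i) = false by rewrite eq_sym.
by apply: DL; mxs; rewrite ?ij1 ?ij2; mxs.
Qed.

Lemma D3' i j : i != j -> D (e j j) (e i j) = 0.
Proof.
move=> ij; have ij1 := negbTE ij; have ij2 : (j == i) = false by rewrite eq_sym.
by have [] := @DL (e j j) (e i j); mxs; rewrite ?ij1 ?ij2; mxs.
Qed.

Lemma D2 i k : i != k -> D (e i i) (e k k) = 0.
Proof.
move=> ik; have ik1 := negbTE ik; have ik2 : (k == i) = false by rewrite eq_sym.
have := @Didem (e i i + e k k).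
rewrite DDl !DDr !D1 add0r addr0 (DC (e k k)) => h; apply: half_eq0; apply: h.
by mxs; rewrite ?ik1 ?ik2; mxs.
Qed.


Lemma D4 i j k : i != j -> k != i -> k != j -> D (e k k) (e i j) = 0.
Proof.
move=> ij ki kj.
have h1 := negbTE ij; have h2 := negbTE ki; have h3 := negbTE kj.
have h4 : (j == i) = false by rewrite eq_sym.
have h5 : (i == k) = false by rewrite eq_sym.
have h6 : (j == k) = false by rewrite eq_sym.
have [] := @DL (e k k + e i i) (e i j).
- by mxs; rewrite ?h1 ?h2 ?h3 ?h4 ?h5 ?h6; mxs.
- by mxs; rewrite ?h1 ?h2 ?h3 ?h4 ?h5 ?h6; mxs.
- by mxs; rewrite ?h1 ?h2 ?h3 ?h4 ?h5 ?h6; mxs.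
by rewrite DDl (proj1 (D3 ij)) addr0.
Qed.

End PartA.

Section S.
Variables (F : fieldType) (n r : nat).
Hypothesis char2 : (2%:R : F) != 0.
Variable Phi : {linear 'M[F]_n -> 'M[F]_r}.
Hypothesis hidem : forall A : 'M[F]_n, A *m A = A -> Phi A *m Phi A = Phi A.
Local Notation e i j := (delta_mx i j : 'M[F]_n).
Local Notation D := (Ddef Phi).
Ltac mxs := rewrite ?(mulmxDl, mulmxDr, mulmxBl, mulmxBr, mulmxN, mulNmx);
  rewrite ?mul_delta_mx_cond ?eqxx.
Ltac simp := rewrite ?(mulr1n, mulr0n, addr0, add0r, subr0, sub0r, oppr0, opprK).

Lemma D5 i j : i != j -> D (e i j) (e j i) = 0.
Proof.
move=> ij.
have [h1 h2] := D3 char2 hidem ij; have h3 := D3' char2 hidem ij; have h4 := D2 char2 hidem ij.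
have ji : j != i by rewrite eq_sym.
have [h5 h6] := D3 char2 hidem ji.
have ij1 := negbTE ij; have ji1 := negbTE ji.
have [] := DL char2 hidem (E := e i j + e j j) (N := e i i - e i j + e j i - e j j).
- by mxs; rewrite ?ij1 ?ji1; simp.
- mxs; rewrite ?ij1 ?ji1; simp.
  by rewrite !subrr add0r subrr addr0 !addrA.
- mxs; rewrite ?ij1 ?ji1; simp.
  by rewrite (addrACA (delta_mx i i)) subrr addNr addr0 add0r (addrACA (delta_mx j i)) subrr addNr addr0.
move=> h _; move: h.
rewrite !DDl !DDr !DNr (DC _ (e i j) (e i i)) (DC _ (e i j) (e j j)) (DC _ (e j j) (e i i)).
by rewrite h1 h2 h3 h4 h5 D1 // !oppr0 !addr0 !add0r.
Qed.

Lemma D6 i j l : i != j -> i != l -> j != l -> D (e i j) (e i l) = 0.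
Proof.
move=> ij il jl.
have h1 := negbTE ij; have h2 := negbTE il; have h3 := negbTE jl.
have h4 : (j == i) = false by rewrite eq_sym.
have h5 : (l == i) = false by rewrite eq_sym.
have h6 : (l == j) = false by rewrite eq_sym.
have [] := DL char2 hidem (E := e i i) (N := e i j + e i l).
- by mxs; simp.
- by mxs; rewrite ?h1 ?h2 ?h3 ?h4 ?h5 ?h6; simp.
- by mxs; rewrite ?h1 ?h2 ?h3 ?h4 ?h5 ?h6; simp.
move=> _; rewrite !DDl !DDr (proj2 (D3 char2 hidem ij)) (proj2 (D3 char2 hidem il)) addr0 add0r.
by rewrite (DC _ (e i l)); apply: half_eq0.
Qed.

Lemma D7 i j k : i != j -> k != j -> i != k -> D (e i j) (e k j) = 0.
Proof.
move=> ij kj ik.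
have h1 := negbTE ij; have h2 := negbTE kj; have h3 := negbTE ik.
have h4 : (j == i) = false by rewrite eq_sym.
have h5 : (j == k) = false by rewrite eq_sym.
have h6 : (k == i) = false by rewrite eq_sym.
have [] := DL char2 hidem (E := e j j) (N := e i j + e k j).
- by mxs; simp.
- by mxs; rewrite ?h1 ?h2 ?h3 ?h4 ?h5 ?h6; simp; rewrite addrC.
- by mxs; rewrite ?h1 ?h2 ?h3 ?h4 ?h5 ?h6; simp.
move=> _; rewrite !DDl !DDr (proj2 (D3 char2 hidem ij)) (proj2 (D3 char2 hidem kj)) addr0 add0r.
by rewrite (DC _ (e k j)); apply: half_eq0.
Qed.

Lemma D8 i j l : i != j -> j != l -> i != l -> D (e i j) (e j l) = 0.
Proof.
move=> ij jl il.
have h1 := negbTE ij; have h2 := negbTE jl; have h3 := negbTE il.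
have h4 : (j == i) = false by rewrite eq_sym.
have h5 : (l == j) = false by rewrite eq_sym.
have h6 : (l == i) = false by rewrite eq_sym.
have [] := DL char2 hidem (E := e j j + e i j) (N := e j l + e i l).
- by mxs; rewrite ?h1 ?h2 ?h3 ?h4 ?h5 ?h6; simp.
- by mxs; rewrite ?h1 ?h2 ?h3 ?h4 ?h5 ?h6; simp.
- by mxs; rewrite ?h1 ?h2 ?h3 ?h4 ?h5 ?h6; simp.
have ji : j != i by rewrite eq_sym.
rewrite !DDl !DDr (proj1 (D3 char2 hidem jl)) (D4 char2 hidem il ji jl).
by rewrite (D6 ij il jl) !addr0 add0r.
Qed.

Lemma D9 i j k l : i != j -> k != l -> i != k -> j != l -> i != l -> j != k ->
  D (e i j) (e k l) = 0.
Proof.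
move=> ij kl ik jl il jk.
have h1 := negbTE ij; have h2 := negbTE kl; have h3 := negbTE ik.
have h4 := negbTE jl; have h5 := negbTE il; have h6 := negbTE jk.
have g1 : (j == i) = false by rewrite eq_sym.
have g2 : (l == k) = false by rewrite eq_sym.
have g3 : (k == i) = false by rewrite eq_sym.
have g4 : (l == j) = false by rewrite eq_sym.
have g5 : (l == i) = false by rewrite eq_sym.
have g6 : (k == j) = false by rewrite eq_sym.
have [] := DL char2 hidem (E := e i i + e k k) (N := e i j + e k l).
- by mxs; rewrite ?h1 ?h2 ?h3 ?h4 ?h5 ?h6 ?g1 ?g2 ?g3 ?g4 ?g5 ?g6; simp.
- by mxs; rewrite ?h1 ?h2 ?h3 ?h4 ?h5 ?h6 ?g1 ?g2 ?g3 ?g4 ?g5 ?g6; simp.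
- by mxs; rewrite ?h1 ?h2 ?h3 ?h4 ?h5 ?h6 ?g1 ?g2 ?g3 ?g4 ?g5 ?g6; simp.
move=> _; rewrite !DDl !DDr (proj2 (D3 char2 hidem ij)) (proj2 (D3 char2 hidem kl)) addr0 add0r.
by rewrite (DC _ (e k l)); apply: half_eq0.
Qed.


Lemma Dunit i j k l : D (e i j) (e k l) = 0.
Proof.
have Dd : forall i k l, D (e i i) (e k l) = 0.
  move=> {}i {}k {}l.
  case: (eqVneq k l) => [?|kl]; first subst l.
    case: (eqVneq i k) => [?|ik]; first (subst k; exact: D1).
    exact: D2.
  case: (eqVneq i k) => [?|ik]; first (subst i; exact: (proj1 (D3 char2 hidem kl))).
  case: (eqVneq i l) => [?|il]; first (subst i; exact: (D3' char2 hidem kl)).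
  exact: (D4 char2 hidem kl ik il).
case: (eqVneq i j) => [?|ij]; first (subst j; exact: Dd).
case: (eqVneq k l) => [?|kl]; first (subst l; by rewrite DC Dd).
case: (eqVneq k i) => [?|ki].
  subst k; case: (eqVneq l j) => [?|lj]; first (subst l; exact: (proj2 (D3 char2 hidem ij))).
  by apply: D6 => //; rewrite eq_sym.
case: (eqVneq l j) => [?|lj].
  by subst l; apply: D7 => //; rewrite eq_sym.
case: (eqVneq k j) => [?|kj].
  subst k; case: (eqVneq l i) => [?|li]; first (subst l; exact: D5).
  by apply: D8 => //; rewrite eq_sym.
case: (eqVneq l i) => [?|li].
  by subst l; rewrite DC; apply: D8 => //; rewrite eq_sym.
by apply: D9 => //; rewrite eq_sym.
Qed.

Lemma Dsuml (I : Type) (s : seq I) (P : pred I) (f : I -> 'M[F]_n) B :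
  D (\sum_(x <- s | P x) f x) B = \sum_(x <- s | P x) D (f x) B.
Proof. exact: (big_morph (D^~ B) (fun x y => DDl Phi x y B) (D0l Phi B)). Qed.

Lemma Dall A B : D A B = 0.
Proof.
have hA : forall k l, D A (e k l) = 0.
  move=> k l; rewrite (matrix_sum_delta A) Dsuml big1 // => i _.
  by rewrite Dsuml big1 // => j _; rewrite DZl Dunit scaler0.
rewrite DC (matrix_sum_delta B) Dsuml big1 // => i _.
by rewrite Dsuml big1 // => j _; rewrite DZl DC hA scaler0.
Qed.

Lemma jordanPhi : jordan_hom Phi.
Proof.
move=> A B; have := Dall A B; rewrite /Ddef => /eqP; rewrite subr_eq0 => /eqP.
by move=> ->.
Qed.

End S.

Section C.
Variables (F : fieldType) (n r : nat).
Hypothesis char2 : (2%:R : F) != 0.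
Variable Phi : {linear 'M[F]_n -> 'M[F]_r}.
Hypothesis hJ : jordan_hom Phi.

Definition phi (A : 'M[F]_n) : 'M[F]_r := Phi A.
Lemma phiD A B : phi (A + B) = phi A + phi B. Proof. exact: raddfD. Qed.
Lemma phiN A : phi (- A) = - phi A. Proof. exact: raddfN. Qed.
Lemma phiB A B : phi (A - B) = phi A - phi B. Proof. exact: raddfB. Qed.
Lemma phi0 : phi 0 = 0. Proof. exact: raddf0. Qed.
Lemma phiZ c A : phi (c *: A) = c *: phi A. Proof. exact: linearZ. Qed.
Lemma phi_sum (I : Type) (s : seq I) (P : pred I) (f : I -> 'M[F]_n) :
  phi (\sum_(x <- s | P x) f x) = \sum_(x <- s | P x) phi (f x).
Proof. exact: raddf_sum. Qed.

Lemma jJ A B : phi (A *m B + B *m A) = phi A *m phi B + phi B *m phi A.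
Proof. exact: hJ. Qed.

Lemma double_inj (X Y : 'M[F]_r) : X + X = Y + Y -> X = Y.
Proof.
move=> h; apply/eqP; rewrite -subr_eq0; apply/eqP; apply: (half_eq0 char2).
by rewrite -addrACA -opprD h subrr.
Qed.

Lemma phi_sq A : phi (A *m A) = phi A *m phi A.
Proof. by apply: double_inj; rewrite -phiD jJ. Qed.

Lemma phi_tri A B : phi (A *m B *m A) = phi A *m phi B *m phi A.
Proof.
have e1 : A *m (A *m B + B *m A) + (A *m B + B *m A) *m A =
   (A *m A *m B + B *m (A *m A)) + (A *m B *m A + A *m B *m A).
  rewrite mulmxDr mulmxDl !mulmxA.
  by rewrite [A *m B *m A + B *m A *m A]addrC addrACA.
have := jJ A (A *m B + B *m A); rewrite e1 jJ phiD jJ phi_sq phiD.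
rewrite !mulmxDr !mulmxDl !mulmxA.
move=> h; apply: double_inj.
apply: (@addrI _ (phi A *m phi A *m phi B + phi B *m phi A *m phi A)).
by rewrite h [phi A *m phi B *m phi A + phi B *m phi A *m phi A]addrC addrACA.
Qed.

Lemma cancel_ends (a x y c u v : 'M[F]_r) : a + x + (y + c) = a + u + (v + c) -> x + y = u + v.
Proof. by rewrite -!addrA => /addrI; rewrite !addrA => /addIr. Qed.

Lemma phi_tri2 A B C : phi (A *m B *m C + C *m B *m A) =
   phi A *m phi B *m phi C + phi C *m phi B *m phi A.
Proof.
have := phi_tri (A + C) B.
rewrite !mulmxDl !mulmxDr !phiD !phi_tri.
rewrite !mulmxDl !mulmxDr.
exact: cancel_ends.
Qed.

End C.

Lemma dsw (R : comPzRingType) m1 m2 m3 m4 (i : 'I_m1) (j : 'I_m2) (k : 'I_m3) (l : 'I_m4) (Z : 'M[R]_(m2,m3)) :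
  delta_mx i j *m Z *m delta_mx k l = Z j k *: delta_mx i l.
Proof.
apply/matrixP => x y; rewrite !mxE (bigD1 k) //= big1 ?addr0; last first.
  by move=> b /negPf bk; rewrite !mxE bk ?andbF ?andFb /= ?mulr0 ?mul0r.
rewrite !mxE eqxx /= (bigD1 j) //= big1 ?addr0; last first.
  by move=> b /negPf bj; rewrite !mxE bj ?andbF ?andFb /= ?mulr0 ?mul0r.
rewrite !mxE !eqxx /= !andbT.
by case: (x == i); case: (y == l); rewrite /= ?mul1r ?mulr1 ?mul0r ?mulr0.
Qed.

Lemma sum_delta1 (R : pzSemiRingType) m : \sum_(a < m) delta_mx a a = 1%:M :> 'M[R]_m.
Proof.
apply/matrixP => x y; rewrite summxE (bigD1 x) //= big1 ?addr0; last first.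
  by move=> b /negPf bx; rewrite !mxE eq_sym bx.
by rewrite !mxE eqxx /= eq_sym.
Qed.

Section PC.
Variables (F : fieldType) (n r : nat).
Hypothesis char2 : (2%:R : F) != 0.
Variable Phi : {linear 'M[F]_n -> 'M[F]_r}.
Hypothesis hJ : jordan_hom Phi.
Local Notation phi := (phi Phi).
Local Notation e i j := (delta_mx i j : 'M[F]_n).
Let ptri := phi_tri char2 hJ.
Let ptri2 := phi_tri2 char2 hJ.
Let psq := phi_sq char2 hJ.

Definition P a := phi (e a a).
Definition H a c := P a *m phi (e a c) *m P c.
Definition K a c := P a *m phi (e c a) *m P c.

Lemma P_idem a : P a *m P a = P a.
Proof. by rewrite /P -psq mul_delta_mx. Qed.

Lemma P_orth a c : a != c -> P a *m P c = 0.
Proof.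
move=> ac.
have h1 : P a *m P c + P c *m P a = 0.
  by rewrite /P -jJ // !mul_delta_mx_0 ?addr0 ?phi0 // eq_sym.
have h2 : P a *m P c *m P a = 0.
  by rewrite /P -ptri mul_delta_mx_0 // mul0mx phi0.
have := congr1 (mulmx (P a)) h1.
by rewrite mulmxDr !mulmxA P_idem h2 addr0 mulmx0.
Qed.

Lemma phi1 : phi 1%:M = \sum_a P a.
Proof. by rewrite -sum_delta1 phi_sum. Qed.

Lemma decomp Z : phi Z = \sum_a \sum_c P a *m phi Z *m P c.
Proof.
have h := ptri 1%:M Z; rewrite mul1mx mulmx1 in h.
rewrite {1}h phi1 !mulmx_suml; apply: eq_bigr => a _.
by rewrite mulmx_sumr.
Qed.

Lemma PF a c Z : P a *m phi Z *m P c =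
  if a == c then Z a a *: P a else Z a c *: H a c + Z c a *: K a c.
Proof.
case: eqP => [<-|/eqP ac].
  by rewrite /P -ptri dsw phiZ.
have := ptri2 (e a a) Z (e c c); rewrite !dsw phiD !phiZ.
move/(congr1 (fun X => P a *m X *m P c)).
rewrite !mulmxDr !mulmxDl -/(P a) -/(P c) !mulmxA P_idem.
rewrite -!mulmxA P_idem !mulmxA.
rewrite (P_orth ac) !mul0mx addr0 -!scalemxAr -!scalemxAl => <-.
by rewrite /H /K.
Qed.


Lemma PE a b i j : a != b -> P a *m phi (e i j) *m P b =
  ((a == i) && (b == j))%:R *: H a b + ((b == i) && (a == j))%:R *: K a b.
Proof. by move=> ab; rewrite PF (negbTE ab) !mxE. Qed.

Lemma SW X Y a b c :
  P a *m phi X *m P b *m phi Y *m P c + P a *m phi Y *m P b *m phi X *m P c =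
  P a *m phi (X *m e b b *m Y + Y *m e b b *m X) *m P c.
Proof. by rewrite ptri2 -/(P b) mulmxDr mulmxDl !mulmxA. Qed.

Lemma ins a b c X Y : (P a *m phi X *m P b) *m (P b *m phi Y *m P c) =
  P a *m phi X *m P b *m phi Y *m P c.
Proof. by rewrite !mulmxA -[_ *m P b *m P b]mulmxA P_idem. Qed.

Lemma Hdef a b : P a *m phi (e a b) *m P b = H a b. Proof. by []. Qed.
Lemma Kdef a b : P a *m phi (e b a) *m P b = K a b. Proof. by []. Qed.

Lemma L1 a b c : a != b -> b != c -> a != c -> H a b *m H b c = H a c.
Proof.
move=> ab bc ac.
have ab1 := negbTE ab; have bc1 := negbTE bc; have ac1 := negbTE ac.
have ba1 : (b == a) = false by rewrite eq_sym.
have cb1 : (c == b) = false by rewrite eq_sym.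
have ca1 : (c == a) = false by rewrite eq_sym.
have := SW (e a b) (e b c) a b c.
rewrite ?(mul_delta_mx_cond, eqxx, ab1, bc1, ac1, ba1, cb1, ca1, mulr1n, mulr0n, mul0mx, addr0).
rewrite -[X in _ + X = _]ins (PE b c ab) ?(eqxx, ab1, bc1, ac1, ba1, cb1, ca1) /=.
rewrite ?(scale0r, add0r, mul0mx, addr0) => h.
by rewrite /H ins h.
Qed.


Lemma L2 a b c : a != b -> b != c -> a != c -> K a b *m K b c = K a c.
Proof.
move=> ab bc ac.
have ab1 := negbTE ab; have bc1 := negbTE bc; have ac1 := negbTE ac.
have ba1 : (b == a) = false by rewrite eq_sym.
have cb1 : (c == b) = false by rewrite eq_sym.
have ca1 : (c == a) = false by rewrite eq_sym.
have := SW (e b a) (e c b) a b c.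
rewrite ?(mul_delta_mx_cond, eqxx, ab1, bc1, ac1, ba1, cb1, ca1, mulr1n, mulr0n, mul0mx, add0r, addr0).
rewrite -[X in _ + X = _]ins (PE c b ab) ?(eqxx, ab1, bc1, ac1, ba1, cb1, ca1) /=.
rewrite ?(scale0r, add0r, mul0mx, addr0) => h.
by rewrite /K ins h.
Qed.

Lemma L3 a b c : a != b -> b != c -> H a b *m K b c = 0.
Proof.
move=> ab bc.
have ab1 := negbTE ab; have bc1 := negbTE bc.
have ba1 : (b == a) = false by rewrite eq_sym.
have cb1 : (c == b) = false by rewrite eq_sym.
have := SW (e a b) (e c b) a b c.
rewrite ?(mul_delta_mx_cond, eqxx, ab1, bc1, ba1, cb1, mulr1n, mulr0n, mul0mx, add0r, addr0, phi0, mulmx0).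
rewrite -[X in _ + X = _]ins (PE c b ab) ?(eqxx, ab1, bc1, ba1, cb1) /=.
case: (eqVneq a c) => [?|ac].
  have ba : b != a by rewrite eq_sym.
  subst c; rewrite (PE a b ba) ?(eqxx, ab1, ba1) /= ?(scale0r, scale1r, add0r, addr0).
  by rewrite -[X in X + _ = _]ins -/(H a b) -/(K b a) => /(half_eq0 char2) ->; rewrite /H /K.
rewrite /= ?(scale0r, add0r, mul0mx, addr0) => h.
by rewrite /H /K ins h.
Qed.

Lemma L4 a b c : a != b -> b != c -> K a b *m H b c = 0.
Proof.
move=> ab bc.
have ab1 := negbTE ab; have bc1 := negbTE bc.
have ba1 : (b == a) = false by rewrite eq_sym.
have cb1 : (c == b) = false by rewrite eq_sym.
have := SW (e b a) (e b c) a b c.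
rewrite ?(mul_delta_mx_cond, eqxx, ab1, bc1, ba1, cb1, mulr1n, mulr0n, mul0mx, add0r, addr0, phi0, mulmx0).
rewrite -[X in _ + X = _]ins (PE b c ab) ?(eqxx, ab1, bc1, ba1, cb1) /=.
case: (eqVneq a c) => [?|ac].
  subst c; rewrite ?(scale0r, scale1r, add0r, addr0) -/(H b a).
  by rewrite -[X in X + _ = _]ins -/(K a b) -/(H b a) => /(half_eq0 char2) ->.
rewrite /= ?(scale0r, add0r, mul0mx, addr0) => h.
by rewrite /H /K ins h.
Qed.

Lemma L5 a b : a != b -> H a b *m H b a + K a b *m K b a = P a.
Proof.
move=> ab.
have ab1 := negbTE ab; have ba1 : (b == a) = false by rewrite eq_sym.
have := SW (e a b) (e b a) a b a.
rewrite ?(mul_delta_mx_cond, eqxx, ab1, ba1, mulr1n, mulr0n, mul0mx, add0r, addr0).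
rewrite -/(P a) !P_idem => h.
by rewrite /H /K !ins h.
Qed.

Lemma PH a b : P a *m H a b = H a b.
Proof. by rewrite /H !mulmxA P_idem. Qed.
Lemma HP a b : H a b *m P b = H a b.
Proof. by rewrite /H -mulmxA P_idem. Qed.
Lemma PK a b : P a *m K a b = K a b.
Proof. by rewrite /K !mulmxA P_idem. Qed.
Lemma KP a b : K a b *m P b = K a b.
Proof. by rewrite /K -mulmxA P_idem. Qed.

Lemma mism (X Y : 'M[F]_r) b c : b != c -> X *m P b = X -> P c *m Y = Y -> X *m Y = 0.
Proof. by move=> bc <- <-; rewrite -mulmxA (mulmxA (P b)) P_orth // mul0mx mulmx0. Qed.

Lemma AbsH a b : a != b -> H a b *m H b a *m H a b = H a b.
Proof.
move=> ab; have ba : b != a by rewrite eq_sym.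
by rewrite -[in RHS](PH a b) -(L5 ab) mulmxDl -[K a b *m K b a *m H a b]mulmxA L4 ?mulmx0 ?addr0.
Qed.

Lemma AbsK a b : a != b -> K a b *m K b a *m K a b = K a b.
Proof.
move=> ab; have ba : b != a by rewrite eq_sym.
by rewrite -[in RHS](PK a b) -(L5 ab) mulmxDl -[H a b *m H b a *m K a b]mulmxA L3 ?mulmx0 ?add0r.
Qed.

End PC.

Section US.
Variables (R : pzRingType) (m r : nat).
Local Notation I := 'I_m.+2.
Definition i0 : I := ord0.
Definition i1 : I := lift ord0 ord0.
Lemma i01 : i0 != i1. Proof. by []. Qed.
Lemma i10 : i1 != i0. Proof. by []. Qed.

Definition Gof (u : I -> I -> 'M[R]_r) := u i0 i1 *m u i1 i0.
Definition av (u : I -> I -> 'M[R]_r) p := if p == i0 then Gof u else u p i0.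
Definition bv (u : I -> I -> 'M[R]_r) j := if j == i0 then Gof u else u i0 j.

Variable u : I -> I -> 'M[R]_r.
Hypothesis uchain : forall a b c, a != b -> b != c -> a != c -> u a b *m u b c = u a c.
Hypothesis umis : forall a b c d, b != c -> u a b *m u c d = 0.
Hypothesis uabs : forall a b, a != b -> u a b *m u b a *m u a b = u a b.

Lemma GG : Gof u *m Gof u = Gof u.
Proof. by rewrite /Gof mulmxA uabs // i01. Qed.

Lemma uG a : a != i0 -> u a i0 *m Gof u = u a i0.
Proof.
move=> a0; rewrite /Gof mulmxA.
case: (eqVneq a i1) => [->|a1]; first by rewrite uabs // i10.
by rewrite (uchain a0 i01 a1) (uchain a1 i10 a0).
Qed.

Lemma Gu j : j != i0 -> Gof u *m u i0 j = u i0 j.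
Proof.
move=> j0; rewrite /Gof.
case: (eqVneq j i1) => [->|j1]; first by rewrite uabs // i01.
have j1' : i1 != j by rewrite eq_sym.
have j0' : i0 != j by rewrite eq_sym.
by rewrite -mulmxA (uchain i10 j0' j1') (uchain i01 j1' j0').
Qed.

Lemma u0j0 j : j != i0 -> u i0 j *m u j i0 = Gof u.
Proof.
move=> j0; case: (eqVneq j i1) => [->|j1]; first by [].
have j1' : i1 != j by rewrite eq_sym.
have j0' : i0 != j by rewrite eq_sym.
by rewrite -(uchain j1 i10 j0) mulmxA (uchain j0' j1 i01).
Qed.

Lemma bvav j p : bv u j *m av u p = if j == p then Gof u else 0.
Proof.
rewrite /bv /av.
case: (eqVneq j i0) => [?|j0]; case: (eqVneq p i0) => [?|p0]; subst.
- by rewrite eqxx GG.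
- rewrite eq_sym (negbTE p0) /Gof -mulmxA umis ?mulmx0 //.
  by rewrite eq_sym.
- rewrite (negbTE j0) /Gof mulmxA umis ?mul0mx //.
- case: (eqVneq j p) => [?|jp]; first by subst; rewrite ?eqxx u0j0.
  by rewrite umis.
Qed.

Lemma avG p : av u p *m Gof u = av u p.
Proof. by rewrite /av; case: eqP => [_|/eqP p0]; [exact: GG | exact: uG]. Qed.

Lemma Gbv j : Gof u *m bv u j = bv u j.
Proof. by rewrite /bv; case: eqP => [_|/eqP j0]; [exact: GG | exact: Gu]. Qed.

Variable v : I -> I -> 'M[R]_r.
Hypothesis uvmis : forall a b c d, b != c -> u a b *m v c d = 0.
Hypothesis uvab : forall a b, a != b -> u a b *m v b a = 0.

Lemma bvav0 j p : bv u j *m av v p = 0.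
Proof.
rewrite /bv /av /Gof.
case: (eqVneq j i0) => [?|j0]; case: (eqVneq p i0) => [?|p0]; subst.
- by rewrite -mulmxA (mulmxA (u i1 i0)) uvab ?i10 // mul0mx mulmx0.
- by rewrite -mulmxA uvmis ?mulmx0 // eq_sym.
- by rewrite mulmxA uvmis ?mul0mx.
- case: (eqVneq j p) => [?|jp]; first by subst; rewrite uvab // eq_sym.
  by rewrite uvmis.
Qed.
End US.

Lemma dsum (R : nmodType) p (i j : 'I_p) (f : 'I_p -> 'I_p -> R) :
  \sum_a \sum_c (if (a == i) && (c == j) then f a c else 0) = f i j.
Proof.
rewrite (eq_bigr (fun a => if a == i then f a j else 0)) => [|a _].
  by rewrite -big_mkcond big_pred1_eq.
case: (a == i) => /=; last by rewrite big1.
by rewrite -big_mkcond big_pred1_eq.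
Qed.

Section PD.
Variables (F : fieldType) (m r : nat).
Hypothesis char2 : (2%:R : F) != 0.
Variable Phi : {linear 'M[F]_m.+2 -> 'M[F]_r}.
Hypothesis hJ : jordan_hom Phi.
Local Notation phi := (phi Phi).
Local Notation e i j := (delta_mx i j : 'M[F]_m.+2).
Local Notation H := (H Phi).
Local Notation K := (K Phi).
Local Notation P := (P Phi).

Lemma qsplit i j : i != j -> phi (e i j) = H i j + K j i.
Proof.
move=> ij.
have T : forall a c, P a *m phi (e i j) *m P c =
   (if (a == i) && (c == j) then H a c else 0) + (if (a == j) && (c == i) then K a c else 0).
  move=> a c; rewrite (PF char2 hJ) !mxE.
  case: (eqVneq a c) => [?|ac].
    subst c; case: (eqVneq a i) => [?|ai]; case: (eqVneq a j) => [?|aj]; subst => //=;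
      rewrite ?scale0r ?addr0 //.
    by move: ij; rewrite eqxx.
  case: (eqVneq a i) => [?|ai]; case: (eqVneq c j) => [?|cj]; 
    case: (eqVneq a j) => [?|aj]; case: (eqVneq c i) => [?|ci]; subst => //=;
    rewrite ?scale0r ?scale1r ?addr0 ?add0r //.
rewrite (decomp char2 hJ).
under eq_bigr do under eq_bigr do rewrite T.
rewrite (eq_bigr (fun a => \sum_c (if (a == i) && (c == j) then H a c else 0) +
                           \sum_c (if (a == j) && (c == i) then K a c else 0))); last first.
  by move=> a _; rewrite big_split.
by rewrite big_split /= !dsum.
Qed.

Local Notation G := (Gof H).
Local Notation G' := (Gof K).

Lemma Hchain a b c : a != b -> b != c -> a != c -> H a b *m H b c = H a c.
Proof. exact: L1. Qed.
Lemma Kchain a b c : a != b -> b != c -> a != c -> K a b *m K b c = K a c.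
Proof. exact: L2. Qed.
Lemma HHmis a b c d : b != c -> H a b *m H c d = 0.
Proof. by move=> bc; apply: (mism char2 hJ bc); [exact: HP | exact: PH]. Qed.
Lemma KKmis a b c d : b != c -> K a b *m K c d = 0.
Proof. by move=> bc; apply: (mism char2 hJ bc); [exact: KP | exact: PK]. Qed.
Lemma HKmis a b c d : b != c -> H a b *m K c d = 0.
Proof. by move=> bc; apply: (mism char2 hJ bc); [exact: HP | exact: PK]. Qed.
Lemma KHmis a b c d : b != c -> K a b *m H c d = 0.
Proof. by move=> bc; apply: (mism char2 hJ bc); [exact: KP | exact: PH]. Qed.
Lemma HKab a b : a != b -> H a b *m K b a = 0.
Proof. by move=> ab; apply: L3 => //; rewrite eq_sym. Qed.
Lemma KHab a b : a != b -> K a b *m H b a = 0.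
Proof. by move=> ab; apply: L4 => //; rewrite eq_sym. Qed.

Lemma dataR6 i j : phi (e i j) = av H i *m bv H j + av K j *m bv K i.
Proof.
case: (eqVneq i j) => [?|ij].
  subst j; rewrite /av /bv; case: (eqVneq i (i0 m)) => [?|i0'].
    by subst i; rewrite (GG (@AbsH _ _ _ char2 Phi hJ)) (GG (@AbsK _ _ _ char2 Phi hJ)) /Gof (L5 char2 hJ (i01 m)).
  by rewrite (L5 char2 hJ i0').
rewrite qsplit // /av /bv.
case: (eqVneq i (i0 m)) => [?|ii0]; case: (eqVneq j (i0 m)) => [?|ji0]; subst.
- by move: ij; rewrite eqxx.
- by rewrite (Gu (@Hchain) (@AbsH _ _ _ char2 _ hJ)) // (uG (@Kchain) (@AbsK _ _ _ char2 _ hJ)).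
- by rewrite (uG (@Hchain) (@AbsH _ _ _ char2 _ hJ)) // (Gu (@Kchain) (@AbsK _ _ _ char2 _ hJ)).
- have ii0' : i0 m != i by rewrite eq_sym.
  have ji0' : i0 m != j by rewrite eq_sym.
  have ji : j != i by rewrite eq_sym.
  by rewrite (Hchain ii0 ji0' ij) (Kchain ji0 ii0' ji).
Qed.

End PD.

Lemma rinv_key (F : fieldType) r k (C : 'M[F]_(r,k)) (R : 'M[F]_(k,r)) (Pi : 'M[F]_(r,k)) (D : 'M[F]_(k,r)) :
  D *m C = 1%:M -> R *m Pi = 1%:M -> C *m R *m (C *m R) = C *m R -> R *m C = 1%:M.
Proof.
move=> hD hR h.
have := congr1 (fun X => D *m X *m Pi) h; rewrite /=.
rewrite !mulmxA hD !mul1mx => h2.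
by rewrite -[R *m C]mulmx1 -hR mulmxA h2.
Qed.

Lemma idem_factor (F : fieldType) r (E : 'M[F]_r) : E *m E = E ->
  exists k (U : 'M[F]_(r, k)) (U' : 'M[F]_(k, r)), U' *m U = 1%:M /\ U *m U' = E.
Proof.
move=> hE; exists (\rank E), (col_base E), (row_base E); split; last exact: mulmx_base.
have /row_fullP [D hD] := col_base_full E.
apply: (rinv_key hD (mulmxVp (row_base_free E))).
by rewrite mulmx_base hE.
Qed.

Fixpoint rowb (R : pzRingType) (p q k : nat) (f : nat -> 'M[R]_(p, q)) {struct k} : 'M[R]_(p, k * q) :=
  match k as k0 return 'M[R]_(p, k0 * q) with
  | 0 => 0
  | k'.+1 => row_mx (f 0%N) (rowb k' (fun c => f c.+1))
  end.

Fixpoint colb (R : pzRingType) (p q k : nat) (f : nat -> 'M[R]_(q, p)) {struct k} : 'M[R]_(k * q, p) :=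
  match k as k0 return 'M[R]_(k0 * q, p) with
  | 0 => 0
  | k'.+1 => col_mx (f 0%N) (colb k' (fun c => f c.+1))
  end.

Lemma divS n x : ((n.+1 + x) %/ n.+1 = (x %/ n.+1).+1)%N.
Proof. by rewrite divnDl ?dvdnn // divnn. Qed.

Lemma ord_modS n x : ord_mod n (n.+1 + x) = ord_mod n x.
Proof. by apply: val_inj; rewrite /= modnDl. Qed.

Lemma kronS (R : pzRingType) (n k : nat) (A : 'M[R]_n.+1) :
  kron_id k.+1 A = block_mx A 0 0 (kron_id k A) :> 'M[R]_(n.+1 + k * n.+1).
Proof.
apply/matrixP => i j; rewrite -(splitK i) -(splitK j).
case: (split i) => i'; case: (split j) => j' /=.
- rewrite block_mxEul /kron_id !mxE /= !divn_small ?eqxx //.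
  congr (A _ _); apply: val_inj; rewrite /= modn_small //.
- by rewrite block_mxEur /kron_id !mxE /= divS divn_small.
- by rewrite block_mxEdl /kron_id !mxE /= divS (divn_small (ltn_ord j')).
- by rewrite block_mxEdr /kron_id !mxE /= !divS eqSS !ord_modS.
Qed.

Section Blocks.
Variable R : pzRingType.

Lemma G5a p q s k (X : 'M[R]_(s, p)) (f : nat -> 'M[R]_(p, q)) :
  (forall c, (c < k)%N -> X *m f c = 0) -> X *m rowb k f = 0.
Proof.
elim: k f => [|k IH] f hf /=; first by rewrite mulmx0.
rewrite mul_mx_row hf // IH ?row_mx0 // => c hc; exact: hf.
Qed.

Lemma G5b p q s k (Y : 'M[R]_(p, s)) (h : nat -> 'M[R]_(q, p)) :
  (forall c, (c < k)%N -> h c *m Y = 0) -> colb k h *m Y = 0.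
Proof.
elim: k h => [|k IH] h hh /=; first by rewrite mul0mx.
rewrite mul_col_mx hh // IH ?col_mx0 // => c hc; exact: hh.
Qed.

Lemma G4 p q q' k k' (h : nat -> 'M[R]_(q, p)) (f : nat -> 'M[R]_(p, q')) :
  (forall c c', (c < k)%N -> (c' < k')%N -> h c *m f c' = 0) -> colb k h *m rowb k' f = 0.
Proof.
move=> H; apply: G5b => c hc; apply: G5a => c' hc'; exact: H.
Qed.

Lemma G3 p q k (h : nat -> 'M[R]_(q, p)) (f : nat -> 'M[R]_(p, q)) :
  (forall c c', (c < k)%N -> (c' < k)%N -> h c *m f c' = if c == c' then 1%:M else 0) ->
  colb k h *m rowb k f = 1%:M.
Proof.
elim: k h f => [|k IH] h f H /=; first by rewrite mulmx0; apply/matrixP => [[]].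
rewrite mul_col_row H // eqxx IH; last first.
  by move=> c c' hc hc'; rewrite H.
rewrite G5a; last by move=> c hc; rewrite H.
rewrite G5b; last by move=> c hc; rewrite H.
by rewrite -scalar_mx_block.
Qed.

Lemma G2 p q s k (f : nat -> 'M[R]_(p, q)) (h : nat -> 'M[R]_(q, s)) :
  rowb k f *m colb k h = \sum_(c < k) f c *m h c.
Proof.
elim: k f h => [|k IH] f h /=; first by rewrite mul0mx big_ord0.
by rewrite mul_row_col IH big_ord_recl.
Qed.

Lemma G1 p s n k (f : nat -> 'M[R]_(p, n.+1)) (h : nat -> 'M[R]_(n.+1, s)) (A : 'M[R]_n.+1) :
  rowb k f *m kron_id k A *m colb k h = \sum_(c < k) f c *m A *m h c.
Proof.
elim: k f h => [|k IH] f h; first by rewrite /= !mul0mx big_ord0.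
rewrite kronS.
change (rowb k.+1 f) with (row_mx (f 0%N) (rowb k (fun c => f c.+1))).
change (colb k.+1 h) with (col_mx (h 0%N) (colb k (fun c => h c.+1))).
rewrite (mul_row_block (n1 := n.+1) (n2 := k * n.+1) (p1 := n.+1) (p2 := k * n.+1)).
rewrite (mul_row_col (n1 := n.+1) (n2 := k * n.+1)).
rewrite !mulmx0 ?mul0mx addr0 add0r IH.
by rewrite big_ord_recl.
Qed.
End Blocks.

Section BL.
Variable F : fieldType.

Lemma delta11 (z w : 'I_1) : delta_mx z w = 1%:M :> 'M[F]_1.
Proof. by apply/matrixP => i j; rewrite !mxE !ord1. Qed.

Lemma dsw' N (i j : 'I_N) m1 m4 (i' : 'I_m1) (l' : 'I_m4) (M : 'M[F]_N) :
  delta_mx i' i *m M *m delta_mx j l' = M i j *: delta_mx i' l'.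
Proof.
apply/matrixP => x y; rewrite !mxE (bigD1 j) //= big1 ?addr0; last first.
  by move=> z /negPf zk; rewrite !mxE zk ?andbF ?andFb /= ?mulr0 ?mul0r.
rewrite !mxE eqxx /= (bigD1 i) //= big1 ?addr0; last first.
  by move=> z /negPf zj; rewrite !mxE zj ?andbF ?andFb /= ?mulr0 ?mul0r.
rewrite !mxE !eqxx /= !andbT.
by case: (x == i'); case: (y == l'); rewrite /= ?mul1r ?mulr1 ?mul0r ?mulr0.
Qed.

Lemma bprod N r (x : 'I_N -> 'M[F]_(r,1)) (y : 'I_N -> 'M[F]_(1,r)) (M : 'M[F]_N) :
  (\sum_i x i *m delta_mx 0 i) *m M *m (\sum_j delta_mx j 0 *m y j) =
  \sum_i \sum_j M i j *: (x i *m y j).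
Proof.
rewrite mulmx_suml mulmx_suml; apply: eq_bigr => i _; rewrite mulmx_sumr; apply: eq_bigr => j _.
have -> : x i *m delta_mx 0 i *m M *m (delta_mx j 0 *m y j) =
          x i *m (delta_mx 0 i *m M *m delta_mx j 0) *m y j by rewrite !mulmxA.
by rewrite dsw' delta11 scalemx1 mul_mx_scalar -scalemxAl.
Qed.

Lemma sum_delta1' N : \sum_(a < N) delta_mx a a = 1%:M :> 'M[F]_N.
Proof.
apply/matrixP => x y; rewrite summxE (bigD1 x) //= big1 ?addr0; last first.
  by move=> b /negPf bx; rewrite !mxE eq_sym bx.
by rewrite !mxE eqxx /= eq_sym.
Qed.

Lemma bprod1 N r (x : 'I_N -> 'M[F]_(r,1)) (y : 'I_N -> 'M[F]_(1,r)) :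
  (\sum_i x i *m delta_mx 0 i) *m (\sum_j delta_mx j 0 *m y j) = \sum_i x i *m y i.
Proof.
rewrite -[X in X *m _]mulmx1 bprod; apply: eq_bigr => i _.
rewrite (bigD1 i) //= big1 ?addr0; first by rewrite mxE eqxx scale1r.
by move=> j /negPf ji; rewrite mxE eq_sym ji scale0r.
Qed.

Lemma bprodT N r (x : 'I_N -> 'M[F]_(r,1)) (y : 'I_N -> 'M[F]_(1,r)) (s : F) :
  (forall j i, y j *m x i = (if j == i then s else 0)%:M) ->
  (\sum_j delta_mx j 0 *m y j) *m (\sum_i x i *m delta_mx 0 i) = s%:M.
Proof.
move=> H; rewrite mulmx_suml.
rewrite (eq_bigr (fun j => s *: delta_mx j j)) => [|j _].
  by rewrite -scaler_sumr sum_delta1' scalemx1.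
rewrite mulmx_sumr (bigD1 j) //= big1 ?addr0.
  by rewrite !mulmxA -(mulmxA _ (y j)) H eqxx mul_mx_scalar -scalemxAl mul_delta_mx.
move=> i /negPf ji; rewrite !mulmxA -(mulmxA _ (y j)) H eq_sym ji.
by rewrite raddf0 ?mulmx0 ?mul0mx.
Qed.

Lemma bzero_l N r s (Z : 'M[F]_(s, r)) (x : 'I_N -> 'M[F]_(r,1)) :
  (forall i, Z *m x i = 0) -> Z *m (\sum_i x i *m delta_mx 0 i) = 0.
Proof. by move=> H; rewrite mulmx_sumr big1 // => i _; rewrite mulmxA H mul0mx. Qed.

Lemma bzero_r N r s (Z : 'M[F]_(r, s)) (y : 'I_N -> 'M[F]_(1,r)) :
  (forall j, y j *m Z = 0) -> (\sum_j delta_mx j 0 *m y j) *m Z = 0.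
Proof. by move=> H; rewrite mulmx_suml big1 // => i _; rewrite -mulmxA H mulmx0. Qed.

Definition ev k (c : nat) : 'cV[F]_k := \col_j ((j : nat) == c)%:R.
Definition er k (c : nat) : 'rV[F]_k := \row_j ((j : nat) == c)%:R.

Lemma er_ev k c c' : (c < k)%N -> er k c *m ev k c' = ((c == c')%:R)%:M.
Proof.
move=> hc; apply/matrixP => x y; rewrite !ord1 !mxE (bigD1 (Ordinal hc)) //= big1 ?addr0.
  by rewrite !mxE eqxx mul1r.
by move=> z; rewrite !mxE -val_eqE /= => /negPf ->; rewrite mul0r.
Qed.

Lemma sum_ev_er k : \sum_(c < k) ev k c *m er k c = 1%:M.
Proof.
apply/matrixP => x y; rewrite summxE (bigD1 x) //= big1 ?addr0.
  rewrite !mxE big_ord1 !mxE eqxx mul1r.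
  by rewrite val_eqE eq_sym.
move=> z zx; rewrite !mxE big_ord1 !mxE.
by rewrite val_eqE eq_sym (negbTE zx) mul0r.
Qed.
End BL.

Lemma finish (F : fieldType) n r N' (e : N' = r) (Phi : 'M[F]_n -> 'M[F]_r)
  (S1 : 'M[F]_(r, N')) (T1 : 'M[F]_(N', r)) (M : 'M[F]_n -> 'M[F]_N') :
  T1 *m S1 = 1%:M -> S1 *m T1 = 1%:M -> (forall A, Phi A = S1 *m M A *m T1) ->
  exists S : 'M[F]_r, S \in unitmx /\ forall A, Phi A = S *m conform_mx (0 : 'M[F]_r) (M A) *m invmx S.
Proof.
subst N' => h1 h2 h3; have [u _] := mulmx1_unit h2.
exists S1; split => // A; rewrite conform_mx_id h3.
have -> : invmx S1 = T1 by rewrite -[invmx S1]mul1mx -h1 -mulmxA mulmxV // mulmx1.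
by [].
Qed.

Lemma count (F : fieldType) r N' (S1 : 'M[F]_(r, N')) (T1 : 'M[F]_(N', r)) :
  T1 *m S1 = 1%:M -> S1 *m T1 = 1%:M -> N' = r.
Proof.
move=> h1 h2; apply/eqP; rewrite eqn_leq; apply/andP; split.
  have := mxrankM_maxl T1 S1; rewrite h1 mxrank1 => h; exact: leq_trans h (rank_leq_col T1).
have := mxrankM_maxl S1 T1; rewrite h2 mxrank1 => h; exact: leq_trans h (rank_leq_col S1).
Qed.

Lemma csum (F : fieldType) r k (X : 'M[F]_(r, k)) (Y : 'M[F]_(k, r)) :
  \sum_(c < k) X *m ev F k c *m (er F k c *m Y) = X *m Y.
Proof.
rewrite (eq_bigr (fun c : 'I_k => X *m (ev F k c *m er F k c) *m Y)) => [|c _]; last by rewrite !mulmxA.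
by rewrite -mulmx_suml -mulmx_sumr sum_ev_er mulmx1.
Qed.

Lemma ex3 (F : fieldType) r k N (T : 'I_k -> 'I_N -> 'I_N -> 'M[F]_r) (M : 'M[F]_N) :
  \sum_(c < k) \sum_i \sum_j M i j *: T c i j = \sum_i \sum_j M i j *: \sum_(c < k) T c i j.
Proof.
rewrite exchange_big; apply: eq_bigr => i _; rewrite exchange_big; apply: eq_bigr => j _.
by rewrite scaler_sumr.
Qed.

Section MB.
Variables (F : fieldType) (n r : nat).
Local Notation N := n.+1.
Variable Phi : 'M[F]_N -> 'M[F]_r.
Variables (aa bb cc dd : 'I_N -> 'M[F]_r) (G G' : 'M[F]_r).
Hypothesis hba : forall j p, bb j *m aa p = if j == p then G else 0.
Hypothesis hdc : forall j p, dd j *m cc p = if j == p then G' else 0.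
Hypothesis hbc : forall j p, bb j *m cc p = 0.
Hypothesis hda : forall j p, dd j *m aa p = 0.
Hypothesis haG : forall i, aa i *m G = aa i.
Hypothesis hGb : forall j, G *m bb j = bb j.
Hypothesis hcG : forall i, cc i *m G' = cc i.
Hypothesis hGd : forall j, G' *m dd j = dd j.
Hypothesis hPhi : forall A, Phi A = \sum_i \sum_j A i j *: (aa i *m bb j + cc j *m dd i).

Lemma GGi : G *m G = G.
Proof. have h := hba 0 0; rewrite eqxx in h; by rewrite -{2}h mulmxA hGb h. Qed.
Lemma GGi' : G' *m G' = G'.
Proof. have h := hdc 0 0; rewrite eqxx in h; by rewrite -{2}h mulmxA hGd h. Qed.

Definition z := 1%:M - (\sum_i aa i *m bb i + \sum_i cc i *m dd i).

Lemma sumA_a p : (\sum_i aa i *m bb i + \sum_i cc i *m dd i) *m aa p = aa p.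
Proof.
rewrite mulmxDl !mulmx_suml (bigD1 p) //= big1 ?addr0; last first.
  by move=> i /negPf ip; rewrite -mulmxA hba ip mulmx0.
rewrite big1 ?addr0; last by move=> i _; rewrite -mulmxA hda mulmx0.
by rewrite -mulmxA hba eqxx haG.
Qed.
Lemma sumA_c p : (\sum_i aa i *m bb i + \sum_i cc i *m dd i) *m cc p = cc p.
Proof.
rewrite mulmxDl !mulmx_suml [X in X + _]big1 ?add0r; last by move=> i _; rewrite -mulmxA hbc mulmx0.
rewrite (bigD1 p) //= big1 ?addr0; last first.
  by move=> i /negPf ip; rewrite -mulmxA hdc ip mulmx0.
by rewrite -mulmxA hdc eqxx hcG.
Qed.
Lemma b_sumA p : bb p *m (\sum_i aa i *m bb i + \sum_i cc i *m dd i) = bb p.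
Proof.
rewrite mulmxDr !mulmx_sumr (bigD1 p) //= big1 ?addr0; last first.
  by move=> i /negPf ip; rewrite mulmxA hba eq_sym ip mul0mx.
rewrite big1 ?addr0; last by move=> i _; rewrite mulmxA hbc mul0mx.
by rewrite mulmxA hba eqxx hGb.
Qed.
Lemma d_sumA p : dd p *m (\sum_i aa i *m bb i + \sum_i cc i *m dd i) = dd p.
Proof.
rewrite mulmxDr !mulmx_sumr [X in X + _]big1 ?add0r; last by move=> i _; rewrite mulmxA hda mul0mx.
rewrite (bigD1 p) //= big1 ?addr0; last first.
  by move=> i /negPf ip; rewrite mulmxA hdc eq_sym ip mul0mx.
by rewrite mulmxA hdc eqxx hGd.
Qed.

Lemma za p : z *m aa p = 0. Proof. by rewrite /z mulmxBl mul1mx sumA_a subrr. Qed.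
Lemma zc p : z *m cc p = 0. Proof. by rewrite /z mulmxBl mul1mx sumA_c subrr. Qed.
Lemma bz p : bb p *m z = 0. Proof. by rewrite /z mulmxBr mulmx1 b_sumA subrr. Qed.
Lemma dz p : dd p *m z = 0. Proof. by rewrite /z mulmxBr mulmx1 d_sumA subrr. Qed.

Lemma zz : z *m z = z.
Proof.
rewrite {1}/z mulmxBl mul1mx.
have -> : (\sum_i aa i *m bb i + \sum_i cc i *m dd i) *m z = 0.
  rewrite mulmxDl !mulmx_suml !big1 ?addr0 // => i _; by rewrite -mulmxA ?bz ?dz mulmx0.
by rewrite subr0.
Qed.


Section Inner.
Variables (k1 k2 t : nat) (U : 'M[F]_(r,k1)) (U' : 'M[F]_(k1,r)) (V : 'M[F]_(r,k2)) (V' : 'M[F]_(k2,r))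
  (Z : 'M[F]_(r,t)) (Z' : 'M[F]_(t,r)).
Hypothesis hUU : U' *m U = 1%:M.
Hypothesis hUG : U *m U' = G.
Hypothesis hVV : V' *m V = 1%:M.
Hypothesis hVG : V *m V' = G'.
Hypothesis hZZ : Z' *m Z = 1%:M.
Hypothesis hZz : Z *m Z' = z.

Definition fA c : 'M[F]_(r, N) := \sum_i (aa i *m U *m ev F k1 c) *m delta_mx 0 i.
Definition hA c : 'M[F]_(N, r) := \sum_j delta_mx j 0 *m (er F k1 c *m (U' *m bb j)).
Definition fC c : 'M[F]_(r, N) := \sum_i (cc i *m V *m ev F k2 c) *m delta_mx 0 i.
Definition hC c : 'M[F]_(N, r) := \sum_j delta_mx j 0 *m (er F k2 c *m (V' *m dd j)).
Definition S1 := row_mx (row_mx (rowb k1 fA) (rowb k2 fC)) Z.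
Definition T1 := col_mx (col_mx (colb k1 hA) (colb k2 hC)) Z'.
Definition MM (A : 'M[F]_N) :=
  block_mx (block_mx (kron_id k1 A) 0 0 (kron_id k2 A^T)) 0 0 (0 : 'M[F]_t).

Lemma hAfA c c' : (c < k1)%N -> (c' < k1)%N -> hA c *m fA c' = if c == c' then 1%:M else 0.
Proof.
move=> hc hc'; rewrite /hA /fA (bprodT (s := (c == c')%:R)).
  by case: (c == c'); rewrite ?raddf0.
move=> j i; rewrite !mulmxA -(mulmxA (er F k1 c *m U') (bb j)) hba.
case: (j == i); last by rewrite mulmx0 !mul0mx raddf0.
rewrite -hUG !mulmxA -(mulmxA (er F k1 c) U' U) hUU mulmx1.
by rewrite -(mulmxA (er F k1 c) U' U) hUU mulmx1 er_ev.
Qed.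

Lemma hCfC c c' : (c < k2)%N -> (c' < k2)%N -> hC c *m fC c' = if c == c' then 1%:M else 0.
Proof.
move=> hc hc'; rewrite /hC /fC (bprodT (s := (c == c')%:R)).
  by case: (c == c'); rewrite ?raddf0.
move=> j i; rewrite !mulmxA -(mulmxA (er F k2 c *m V') (dd j)) hdc.
case: (j == i); last by rewrite mulmx0 !mul0mx raddf0.
rewrite -hVG !mulmxA -(mulmxA (er F k2 c) V' V) hVV mulmx1.
by rewrite -(mulmxA (er F k2 c) V' V) hVV mulmx1 er_ev.
Qed.

Lemma hAfC c c' : hA c *m fC c' = 0.
Proof.
rewrite /hA /fC (bprodT (s := 0)) ?raddf0 // => j i.
by rewrite !mulmxA -(mulmxA (er F k1 c *m U') (bb j)) hbc mulmx0 !mul0mx; case: ifP; rewrite raddf0.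
Qed.

Lemma hCfA c c' : hC c *m fA c' = 0.
Proof.
rewrite /hC /fA (bprodT (s := 0)) ?raddf0 // => j i.
by rewrite !mulmxA -(mulmxA (er F k2 c *m V') (dd j)) hda mulmx0 !mul0mx; case: ifP; rewrite raddf0.
Qed.

Lemma Z'z : Z' *m z = Z'. Proof. by rewrite -hZz mulmxA hZZ mul1mx. Qed.
Lemma zZ : z *m Z = Z. Proof. by rewrite -hZz -mulmxA hZZ mulmx1. Qed.

Lemma Z'fA c : Z' *m fA c = 0.
Proof. by apply: bzero_l => i; rewrite -Z'z !mulmxA -(mulmxA Z' z) za mulmx0 !mul0mx. Qed.
Lemma Z'fC c : Z' *m fC c = 0.
Proof. by apply: bzero_l => i; rewrite -Z'z !mulmxA -(mulmxA Z' z) zc mulmx0 !mul0mx. Qed.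
Lemma hAZ c : hA c *m Z = 0.
Proof. by apply: bzero_r => j; rewrite -zZ -!mulmxA (mulmxA (bb j)) bz mul0mx !mulmx0. Qed.
Lemma hCZ c : hC c *m Z = 0.
Proof. by apply: bzero_r => j; rewrite -zZ -!mulmxA (mulmxA (dd j)) dz mul0mx !mulmx0. Qed.


Lemma TS1 : T1 *m S1 = 1%:M.
Proof.
rewrite /T1 /S1 !mul_col_row !mul_col_mx !mul_mx_row.
rewrite (G3 hAfA) (G3 hCfC) (G4 (fun c c' _ _ => hAfC c c')) (G4 (fun c c' _ _ => hCfA c c')).
rewrite (G5b (fun c _ => hAZ c)) (G5b (fun c _ => hCZ c)).
rewrite (G5a (fun c _ => Z'fA c)) (G5a (fun c _ => Z'fC c)) hZZ.
by rewrite col_mx0 row_mx0 -!scalar_mx_block.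
Qed.

Lemma sumfA : rowb k1 fA *m colb k1 hA = \sum_i aa i *m bb i.
Proof.
rewrite G2 /fA /hA (eq_bigr (fun c : 'I_k1 => \sum_i aa i *m U *m ev F k1 c *m (er F k1 c *m (U' *m bb i)))).
  rewrite exchange_big; apply: eq_bigr => i _.
  by rewrite csum mulmxA -(mulmxA (aa i)) hUG haG.
by move=> c _; rewrite bprod1.
Qed.

Lemma sumfC : rowb k2 fC *m colb k2 hC = \sum_i cc i *m dd i.
Proof.
rewrite G2 /fC /hC (eq_bigr (fun c : 'I_k2 => \sum_i cc i *m V *m ev F k2 c *m (er F k2 c *m (V' *m dd i)))).
  rewrite exchange_big; apply: eq_bigr => i _.
  by rewrite csum mulmxA -(mulmxA (cc i)) hVG hcG.
by move=> c _; rewrite bprod1.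
Qed.

Lemma ST1 : S1 *m T1 = 1%:M.
Proof.
by rewrite /S1 /T1 !mul_row_col sumfA sumfC hZz /z addrC subrK.
Qed.

Lemma PhiEq A : Phi A = S1 *m MM A *m T1.
Proof.
rewrite /S1 /MM /T1 !mul_row_block !mul_row_col ?mulmx0 ?mul0mx ?addr0 ?add0r.
rewrite mul_row_col mul0mx addr0 !G1 /fA /hA /fC /hC.
rewrite (eq_bigr (fun c : 'I_k1 => \sum_i \sum_j A i j *: (aa i *m U *m ev F k1 c *m (er F k1 c *m (U' *m bb j))))); last by move=> c _; rewrite bprod.
rewrite (eq_bigr (fun c : 'I_k2 => \sum_i \sum_j A^T i j *: (cc i *m V *m ev F k2 c *m (er F k2 c *m (V' *m dd j))))); last by move=> c _; rewrite bprod.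
rewrite !ex3.
have e1 : forall i j, \sum_(c < k1) aa i *m U *m ev F k1 c *m (er F k1 c *m (U' *m bb j)) = aa i *m bb j.
  by move=> i j; rewrite csum mulmxA -(mulmxA (aa i)) hUG haG.
have e2 : forall i j, \sum_(c < k2) cc i *m V *m ev F k2 c *m (er F k2 c *m (V' *m dd j)) = cc i *m dd j.
  by move=> i j; rewrite csum mulmxA -(mulmxA (cc i)) hVG hcG.
have hL : Phi A = \sum_i \sum_j A i j *: (aa i *m bb j) + \sum_i \sum_j A^T i j *: (cc i *m dd j).
  have hT : \sum_i \sum_j A^T i j *: (cc i *m dd j) = \sum_i \sum_j A i j *: (cc j *m dd i).
    by rewrite exchange_big; apply: eq_bigr => i _; apply: eq_bigr => j _; rewrite mxE.
  rewrite hT hPhi -big_split; apply: eq_bigr => i _; rewrite -big_split; apply: eq_bigr => j _.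
  by rewrite scalerDr.
rewrite hL; congr (_ + _); apply: eq_bigr => i _; apply: eq_bigr => j _.
  by rewrite e1.
by rewrite e2.
Qed.
End Inner.

Lemma mainB : exists (S : 'M[F]_r) (k1 k2 : nat),
  [/\ S \in unitmx, (N * k1 + N * k2 <= r)%N &
      forall A, Phi A = S *m std_form r k1 k2 A *m invmx S].
Proof.
have [k1 [U [U' [hUU hUG]]]] := idem_factor GGi.
have [k2 [V [V' [hVV hVG]]]] := idem_factor GGi'.
have [t [Z [Z' [hZZ hZz]]]] := idem_factor zz.
have cnt := count (@TS1 k1 k2 t U U' V V' Z Z' hUU hUG hVV hVG hZZ hZz)
                  (@ST1 k1 k2 t U U' V V' Z Z' hUG hVG hZz).
have le : (N * k1 + N * k2 <= r)%N by rewrite -cnt (mulnC N k1) (mulnC N k2) leq_addr.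
have ht : t = (r - (N * k1 + N * k2))%N by rewrite -cnt (mulnC N k1) (mulnC N k2) addKn.
subst t.
have [S [uS hS]] := finish cnt (@TS1 k1 k2 _ U U' V V' Z Z' hUU hUG hVV hVG hZZ hZz)
                  (@ST1 k1 k2 _ U U' V V' Z Z' hUG hVG hZz) (@PhiEq k1 k2 _ U U' V V' Z Z' hUG hVG).
by exists S, k1, k2; split => // A; rewrite hS.
Qed.
End MB.

Lemma hPhi_gen (F : fieldType) n r (Phi : {linear 'M[F]_n -> 'M[F]_r}) (T : 'I_n -> 'I_n -> 'M[F]_r) :
  (forall i j, Phi (delta_mx i j) = T i j) ->
  forall A, Phi A = \sum_i \sum_j A i j *: T i j.
Proof.
move=> h A; rewrite {1}(matrix_sum_delta A) raddf_sum; apply: eq_bigr => i _.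
by rewrite raddf_sum; apply: eq_bigr => j _; rewrite -h; apply: linearZ.
Qed.

Lemma conf00 (F : fieldType) m n m' n' : conform_mx (0 : 'M[F]_(m, n)) (0 : 'M[F]_(m', n')) = 0.
Proof.
rewrite /conform_mx; case: eqP => // e1; case: eqP => // e2.
by apply/matrixP => i j; rewrite castmxE !mxE.
Qed.

Theorem theorem4p5 (F : fieldType) (n r : nat)
  (char2 : (2%:R : F) != 0)
  (Phi : {linear 'M[F]_n -> 'M[F]_r})
  (hidem : forall A : 'M[F]_n, A *m A = A -> Phi A *m Phi A = Phi A) :
  jordan_hom Phi /\
  exists (S : 'M[F]_r) (k1 k2 : nat),
    [/\ S \in unitmx, (n * k1 + n * k2 <= r)%N &
        forall A : 'M[F]_n, Phi A = S *m std_form r k1 k2 A *m invmx S].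
Proof.
have hJ := jordanPhi char2 hidem.
split => //.
case: n Phi hidem hJ => [|[|m]] Phi hidem hJ.
- exists 1%:M, 0%N, 0%N; split => //; first exact: unitmx1.
  move=> A; rewrite invmx1 mul1mx mulmx1.
  have -> : A = 0 by apply/matrixP => [[]].
  rewrite linear0 /std_form /=.
  by rewrite !block_mx0 conf00.
- pose P0 := Phi (delta_mx 0 0).
  have hP : P0 *m P0 = P0 by apply: hidem; rewrite mul_delta_mx.
  apply: (@mainB F 0 r Phi (fun _ => P0) (fun _ => P0) (fun _ => 0) (fun _ => 0) P0 0).
  + by move=> j p; rewrite !ord1 eqxx.
  + by move=> j p; rewrite mulmx0; case: ifP.
  + by move=> j p; rewrite mulmx0.
  + by move=> j p; rewrite mul0mx.
  + by [].
  + by [].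
  + by move=> i; rewrite mulmx0.
  + by move=> j; rewrite mul0mx.
  apply: hPhi_gen => i j; rewrite !ord1 mulmx0 addr0 hP.
  by [].
- apply: (@mainB F m.+1 r Phi (av (H Phi)) (bv (H Phi)) (av (K Phi)) (bv (K Phi)) (Gof (H Phi)) (Gof (K Phi))).
  + exact: (bvav (Hchain char2 hJ) (HHmis char2 hJ) (AbsH char2 hJ)).
  + exact: (bvav (Kchain char2 hJ) (KKmis char2 hJ) (AbsK char2 hJ)).
  + exact: (bvav0 (HKmis char2 hJ) (HKab char2 hJ)).
  + exact: (bvav0 (KHmis char2 hJ) (KHab char2 hJ)).
  + exact: (avG (Hchain char2 hJ) (AbsH char2 hJ)).
  + exact: (Gbv (Hchain char2 hJ) (AbsH char2 hJ)).
  + exact: (avG (Kchain char2 hJ) (AbsK char2 hJ)).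
  + exact: (Gbv (Kchain char2 hJ) (AbsK char2 hJ)).
  apply: hPhi_gen => i j; exact: (dataR6 char2 hJ).
Qed.
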